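(* In the setting described in the context (with $Q$ possibly infinite-dimensional and $\Omega$ admissible), for $\tau\in L$ let $k^{\mathrm{S}}_\tau:Q\to\mathbb{C}$ be $$k^{\mathrm{S}}_\tau(\phi)=\exp\Big(\Omega(q(\tau),\phi)+\mathrm{i}[\tau,\phi]-\tfrac12\Omega(q(\tau),q(\tau))-\tfrac{\mathrm{i}}{2}[\tau,\tau]\Big),$$ and regard it (by its canonical extension) as a continuous function on $\hat{Q}$. Then the linear span of $\{k^{\mathrm{S}}_\tau:\tau\in L\}$ is dense in $\mathrm{L}^2(\hat{Q},\nu_Q)$.
   Context: $L$ is a real vector space and $[\cdot,\cdot]:L\times L\to\mathbb{R}$ is bilinear such that $\omega(\xi,\xi')=\frac12[\xi,\xi']-\frac12[\xi',\xi]$ is non-degenerate. $M=\{\tau\in L:[\xi,\tau]=0\ \forall\xi\in L\}$, $N=\{\tau\in L:[\tau,\xi]=0\ \forall\xi\in L\}$, and $L=M\oplus N$ is assumed. $Q=L/M$ with quotient map $q$; $[\cdot,\cdot]$ descends to $L\times Q\to\mathbb{R}$. $\Omega:Q\times Q\to\mathbb{C}$ is a symmetric bilinear form with positive definite real part which is admissible: $Q$ with inner product $\Re\Omega$ is a separable real Hilbert space, $\Im\Omega$ is continuous, for every $\xi\in L$ the map $\phi\mapsto[\xi,\phi]$ is continuous on $Q$, and every continuous linear map $Q\to\mathbb{R}$ is of the form $\phi\mapsto[\xi,\phi]$ for some $\xi\in L$. $\hat{Q}$ denotes the algebraic dual of the topological dual $Q^*$ of $Q$, with the canonical inclusion $Q\hookrightarrow\hat{Q}$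 and the initial topology making all evaluations $\hat{Q}\ni x\mapsto x(\ell)$, $\ell\in Q^*$, continuous. $\nu_Q$ is the Gaussian probability measure on $\hat{Q}$ determined by $\int_{\hat{Q}}\exp(\mathrm{i}\,x(\ell))\,\mathrm{d}\nu_Q(x)=\exp(-\frac14\|\ell\|^2)$ for all $\ell\in Q^*$ (equivalently, its pushforward to every finite-dimensional quotient of $Q$ is the Gaussian measure with density proportional to $\exp(-\Re\Omega(\phi,\phi))$ in the quotient norm). A continuous function on $Q$ that is invariant under translations by a closed subspace $W$ of finite codimension factors through the finite-dimensional space $Q/W$, which is also a quotient of $\hat{Q}$; this gives its canonical extension to a continuous function on $\hat{Q}$. Each $k^{\mathrm{S}}_\tau$ is of this type. *)

(* Defs.v *)
From HB Require Import structures.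
From mathcomp Require Import all_boot all_order all_algebra.
From mathcomp Require Import all_classical all_reals all_analysis.
Set Implicit Arguments. Unset Strict Implicit. Unset Printing Implicit Defensive.
Import Order.TTheory GRing.Theory Num.Theory.
Local Open Scope classical_set_scope.
Local Open Scope ring_scope.

Section Defs.
Variable R : realType.

Definition bilinear_form (V : lmodType R) (B : V -> V -> R) : Prop :=
  (forall a x y z, B (a *: x + y) z = a * B x z + B y z) /\
  (forall a x y z, B z (a *: x + y) = a * B z x + B z y).

Variable Q : lmodType R.
Variable OmR : Q -> Q -> R.   (* real part of Omega: the inner product on Q *)

Definition qnorm (phi : Q) : R := Num.sqrt (OmR phi phi).

Definition Qcont (l : Q -> R) : Prop :=
  forall phi0 (e : R), 0 < e -> exists2 d : R, 0 < d &
    forall phi, qnorm (phi - phi0) < d -> `|l phi - l phi0| < e.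

Definition Qcont2 (B : Q -> Q -> R) : Prop :=
  forall phi0 psi0 (e : R), 0 < e -> exists2 d : R, 0 < d &
    forall phi psi, qnorm (phi - phi0) < d -> qnorm (psi - psi0) < d ->
      `|B phi psi - B phi0 psi0| < e.

Definition Q_complete : Prop :=
  forall u : nat -> Q,
    (forall e : R, 0 < e -> exists N, forall m n, (N <= m)%N -> (N <= n)%N ->
        qnorm (u m - u n) < e) ->
    exists phi, forall e : R, 0 < e -> exists N, forall n, (N <= n)%N ->
        qnorm (u n - phi) < e.

Definition Q_separable : Prop :=
  exists d : nat -> Q, forall phi (e : R), 0 < e -> exists n, qnorm (phi - d n) < e.

Definition is_Qstar (l : Q -> R) : Prop :=
  (forall a x y, l (a *: x + y) = a * l x + l y) /\ Qcont l.

Definition dual_norm (l : Q -> R) : R :=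
  sup ((fun phi => `|l phi|) @` [set phi | OmR phi phi <= 1]).

(* Qhat = algebraic dual of Qstar.  An element is represented by its values on
   all functions Q -> R, required to be linear on Qstar and 0 outside Qstar
   (so this type is in bijection with the algebraic dual of Qstar). *)
Record Qhat := MkQhat {
  qh : (Q -> R) -> R ;
  qh_out : forall l, ~ is_Qstar l -> qh l = 0 ;
  qh_lin : forall (a : R) l m, is_Qstar l -> is_Qstar m ->
     qh (fun phi => a * l phi + m phi) = a * qh l + qh m }.

Definition Qhat0 : Qhat.
Proof. by exists (fun _ => 0) => // a l m _ _; rewrite mulr0 addr0. Defined.

HB.instance Definition _ := gen_eqMixin Qhat.
HB.instance Definition _ := gen_choiceMixin Qhat.
HB.instance Definition _ := isPointed.Build Qhat Qhat0.

Definition cylinders : set (set Qhat) :=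
  [set A | exists l : Q -> R, is_Qstar l /\ exists B : set R,
     measurable B /\ A = (fun x : Qhat => qh x l) @^-1` B].

Definition QhatM := g_sigma_algebraType cylinders.

End Defs.

Section Coherent.
Variables (R : realType) (L Q : lmodType R).
Variables (br : L -> L -> R) (q : L -> Q) (bQ : L -> Q -> R).
Variables (OmR OmI : Q -> Q -> R).

(* the exponent of k^S_tau, evaluated on x in Qhat via the canonical
   extension: the continuous linear functionals phi |-> Omega(q tau, phi)
   and phi |-> [tau, phi] are replaced by evaluation of x at them. *)
Definition kS_arg_re (tau : L) (x : Qhat OmR) : R :=
  qh x (fun phi => OmR (q tau) phi) - OmR (q tau) (q tau) / 2.
Definition kS_arg_im (tau : L) (x : Qhat OmR) : R :=
  qh x (fun phi => OmI (q tau) phi + bQ tau phi)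
  - OmI (q tau) (q tau) / 2 - br tau tau / 2.

(* real and imaginary parts of k^S_tau = exp(re + i im) on Qhat *)
Definition kS_re (tau : L) (x : Qhat OmR) : R :=
  expR (kS_arg_re tau x) * cos (kS_arg_im tau x).
Definition kS_im (tau : L) (x : Qhat OmR) : R :=
  expR (kS_arg_re tau x) * sin (kS_arg_im tau x).

(* real / imaginary part of the finite combination sum_j (a_j + i b_j) k^S_{tau_j} *)
Definition span_re n (tau : 'I_n -> L) (a b : 'I_n -> R) (x : Qhat OmR) : R :=
  \sum_(j < n) (a j * kS_re (tau j) x - b j * kS_im (tau j) x).
Definition span_im n (tau : 'I_n -> L) (a b : 'I_n -> R) (x : Qhat OmR) : R :=
  \sum_(j < n) (a j * kS_im (tau j) x + b j * kS_re (tau j) x).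
End Coherent.
Arguments kS_arg_re {R L Q} q OmR tau x.
Arguments kS_arg_im {R L Q} br q bQ OmR OmI tau x.
Arguments kS_re {R L Q} br q bQ OmR OmI tau x.
Arguments kS_im {R L Q} br q bQ OmR OmI tau x.
Arguments span_re {R L Q} br q bQ OmR OmI {n} tau a b x.
Arguments span_im {R L Q} br q bQ OmR OmI {n} tau a b x.

(* Main.v *)
Require Import Defs.
From HB Require Import structures.
From mathcomp Require Import all_boot all_order all_algebra.
From mathcomp Require Import all_classical all_reals all_analysis.
From mathcomp Require Import ring lra measurable_realfun.
Set Implicit Arguments. Unset Strict Implicit. Unset Printing Implicit Defensive.
Import Order.TTheory GRing.Theory Num.Theory.
Import numFieldNormedType.Exports.
Local Open Scope classical_set_scope.
Local Open Scope ring_scope.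

Section Basics.
Variables (R : realType) (Q : lmodType R) (OmR : Q -> Q -> R).
Local Notation T := (QhatM OmR).

Lemma is_Qstar0 : is_Qstar OmR (fun _ => 0).
Proof.
split; first by move=> *; rewrite mulr0 addr0.
move=> phi0 e e0; exists 1 => // phi _; by rewrite subrr normr0.
Qed.

Lemma is_QstarL (a : R) l m : is_Qstar OmR l -> is_Qstar OmR m ->
  is_Qstar OmR (fun phi => a * l phi + m phi).
Proof.
move=> [ll cl] [lm cm]; split.
  move=> b x y; rewrite ll lm; ring.
move=> phi0 e e0.
have e2 : 0 < e / 2 / (`|a| + 1) by rewrite divr_gt0 ?divr_gt0 // ltr_wpDl.
have [d1 d10 H1] := cl phi0 _ e2.
have [d2 d20 H2] := cm phi0 (e / 2) (divr_gt0 e0 (ltr0n _ 2)).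
exists (Num.min d1 d2); first by rewrite lt_min d10 d20.
move=> phi; rewrite lt_min => /andP[h1 h2].
have := H1 _ h1; have := H2 _ h2 => {}h2 {}h1.
rewrite (_ : _ - _ = a * (l phi - l phi0) + (m phi - m phi0)); last by ring.
rewrite (le_lt_trans (ler_normD _ _)) // normrM.
rewrite [e]splitr ltr_leD // ?ltW //.
have -> : e / 2 = (`|a| + 1) * (e / 2 / (`|a| + 1)).
  by rewrite [RHS]mulrC divfK // gt_eqF // ltr_wpDl.
apply: (@le_lt_trans _ _ ((`|a| + 1) * `|l phi - l phi0|)).
  by rewrite ler_wpM2r // lerDl.
by rewrite ltr_pM2l // ltr_wpDl.
Qed.

Lemma qh0 (x : Qhat OmR) : qh x (fun _ => 0) = 0.
Proof.
have := @qh_lin _ _ _ x 1 _ _ is_Qstar0 is_Qstar0.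
rewrite (_ : (fun phi => 1 * 0 + 0) = (fun _ : Q => 0 : R)); last first.
  by apply/funext => ?; rewrite mulr0 addr0.
rewrite mul1r => h; lra.
Qed.

Lemma qhL (x : Qhat OmR) a l m : is_Qstar OmR l -> is_Qstar OmR m ->
  qh x (fun phi => a * l phi + m phi) = a * qh x l + qh x m.
Proof. by move=> hl hm; rewrite qh_lin. Qed.

Lemma is_QstarZ (a : R) l : is_Qstar OmR l -> is_Qstar OmR (fun phi => a * l phi).
Proof.
move=> hl; have := is_QstarL a hl is_Qstar0.
by rewrite (_ : (fun phi => a * l phi + 0) = (fun phi => a * l phi)) //; apply/funext => ?; rewrite addr0.
Qed.

Lemma qhZ (x : Qhat OmR) a l : is_Qstar OmR l ->
  qh x (fun phi => a * l phi) = a * qh x l.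
Proof.
move=> hl; have := qhL x a hl is_Qstar0.
rewrite qh0 addr0 (_ : (fun phi => a * l phi + 0) = (fun phi => a * l phi)) //.
by apply/funext => ?; rewrite addr0.
Qed.

Lemma mqh l : is_Qstar OmR l -> measurable_fun setT (fun x : T => qh x l).
Proof.
move=> hl _ B mB; rewrite setTI; apply: sub_gen_smallest.
by exists l; split => //; exists B.
Qed.

End Basics.

Section Trig.
Variables (R : realType) (Q : lmodType R) (OmR : Q -> Q -> R).
Local Notation T := (QhatM OmR).
Local Notation QS := (is_Qstar OmR).

Definition tterm (t : (Q -> R) * (R * R)) (x : Qhat OmR) : R :=
  t.2.1 * cos (qh x t.1) + t.2.2 * sin (qh x t.1).
Definition tp (s : seq ((Q -> R) * (R * R))) (x : Qhat OmR) : R :=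
  \sum_(t <- s) tterm t x.

Definition Trig (f : T -> R) : Prop :=
  exists s, List.Forall (fun t => QS t.1) s /\ forall x, f x = tp s x.

Lemma Trig_ext f g : Trig f -> (forall x, g x = f x) -> Trig g.
Proof. by move=> [s [hs e]] fg; exists s; split => // x; rewrite fg e. Qed.

Lemma Trig0 : Trig (fun _ => 0).
Proof. by exists [::]; split => // x; rewrite /tp big_nil. Qed.

Lemma TrigD f g : Trig f -> Trig g -> Trig (fun x => f x + g x).
Proof.
move=> [s [hs e]] [s' [hs' e']]; exists (s ++ s'); split.
  by apply/List.Forall_app.
by move=> x; rewrite /tp big_cat /= e e'.
Qed.

Lemma Trig1 l a b : QS l ->
  Trig (fun x => a * cos (qh x l) + b * sin (qh x l)).
Proof.
move=> hl; exists [:: (l, (a, b))]; split; first by constructor.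
by move=> x; rewrite /tp big_cons big_nil addr0.
Qed.

Lemma TrigZ c f : Trig f -> Trig (fun x => c * f x).
Proof.
move=> [s [hs e]]; exists [seq (t.1, (c * t.2.1, c * t.2.2)) | t <- s]; split.
  apply/List.Forall_forall => t /List.in_map_iff [u [<- hu]] /=.
  by move: hs => /List.Forall_forall; apply.
move=> x; rewrite e /tp big_map mulr_sumr; apply: eq_bigr => t _.
by rewrite /tterm /=; ring.
Qed.

Lemma Trig_sum (I : Type) (s : seq I) (F : I -> T -> R) :
  (forall i, List.In i s -> Trig (F i)) -> Trig (fun x => \sum_(i <- s) F i x).
Proof.
elim: s => [_|i s ih h].
  eapply Trig_ext; first exact: Trig0.
  by move=> x /=; rewrite big_nil.
eapply Trig_ext; first exact: (TrigD (h i (or_introl erefl)) (ih (fun j hj => h j (or_intror hj)))).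
by move=> x /=; rewrite big_cons.
Qed.

Lemma Trig_cst c : Trig (fun _ => c).
Proof.
eapply Trig_ext; first exact: (Trig1 c 0 (is_Qstar0 OmR)).
move=> x /=.
by rewrite qh0 cos0 sin0; ring.
Qed.

Lemma Trig_sinB l d : QS l -> Trig (fun x => sin (qh x l - d)).
Proof.
move=> hl; eapply Trig_ext; first exact: (Trig1 (- sin d) (cos d) hl).
move=> x /=.
by rewrite -sinN sinD cosN; ring.
Qed.

Lemma Trig_term2 t u : QS t.1 -> QS u.1 -> Trig (fun x => tterm t x * tterm u x).
Proof.
case: t => l1 [a b]; case: u => l2 [c d] /= h1 h2.
have hp := is_QstarL 1 h1 h2.
have hm := is_QstarL (-1) h2 h1.
eapply Trig_ext; first exact: (TrigD (Trig1 ((a*c - b*d)/2) ((a*d + b*c)/2) hp)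
                       (Trig1 ((a*c + b*d)/2) ((b*c - a*d)/2) hm)).
move=> x /=.
rewrite !qhL // /tterm /= !mul1r !mulN1r.
set A := qh x l1; set B := qh x l2.
rewrite cosD sinD [- B + A]addrC cosD sinD cosN sinN.
by field.
Qed.

Lemma TrigM f g : Trig f -> Trig g -> Trig (fun x => f x * g x).
Proof.
move=> [s [hs e]] [s' [hs' e']].
eapply Trig_ext; first apply: (Trig_sum (F := fun t x => \sum_(u <- s') tterm t x * tterm u x)).
  2: by move=> x /=; rewrite e e' /tp mulr_suml; apply: eq_bigr => t _; rewrite mulr_sumr.
move=> t ht; apply: Trig_sum => u hu; apply: Trig_term2.
  by move: hs => /List.Forall_forall; apply.
by move: hs' => /List.Forall_forall; apply.
Qed.

Lemma tterm_meas t : QS t.1 -> measurable_fun setT (tterm t : T -> R).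
Proof.
move=> ht; apply: measurable_funD; apply: measurable_funM;
  try exact: measurable_cst.
- exact: measurableT_comp (continuous_measurable_fun (@continuous_cos R)) (mqh ht).
- exact: measurableT_comp (continuous_measurable_fun (@continuous_sin R)) (mqh ht).
Qed.

Lemma Trig_meas f : Trig f -> measurable_fun setT f.
Proof.
move=> [s [hs e]]; rewrite (_ : f = tp s); last by apply/funext => x; rewrite e.
elim: s hs {e} => [_|t s ih /List.Forall_cons_iff [ht hs]].
  rewrite (_ : tp [::] = cst 0); first exact: measurable_cst.
  by apply/funext => x; rewrite /tp big_nil.
rewrite (_ : tp (t :: s) = (tterm t : T -> R) \+ tp s).
  exact: measurable_funD (tterm_meas ht) (ih hs).
by apply/funext => x; rewrite /tp big_cons.
Qed.

Lemma Trig_bound f : Trig f -> exists M, forall x, `|f x| <= M.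
Proof.
move=> [s [hs e]]; exists (\sum_(t <- s) (`|t.2.1| + `|t.2.2|)) => x.
rewrite e /tp; apply: (le_trans (ler_norm_sum _ _ _)); apply: ler_sum => t _.
rewrite /tterm (le_trans (ler_normD _ _)) // lerD // normrM ler_piMr //
  ?cos_max ?sin_max //.
Qed.

End Trig.

Section Appx.
Variables (R : realType) (Q : lmodType R) (OmR : Q -> Q -> R).
Local Notation T := (QhatM OmR).
Variable P : probability T R.

Local Open Scope ereal_scope.

Lemma efin_ge0 (r : R) : (0 <= r)%R -> 0 <= r%:E.
Proof. by rewrite lee_fin. Qed.

Lemma int_leZ1 (F G : T -> R) (c : R) : (0 <= c)%R ->
  measurable_fun setT F -> measurable_fun setT G ->
  (forall x, 0 <= F x)%R -> (forall x, 0 <= G x)%R ->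
  (forall x, F x <= c * G x)%R ->
  \int[P]_x (F x)%:E <= c%:E * \int[P]_x (G x)%:E.
Proof.
move=> c0 mF mG F0 G0 FG.
rewrite -ge0_integralZl_EFin //; last by apply/measurable_EFinP.
  apply: ge0_le_integral => //.
  - by move=> x _; exact: efin_ge0.
  - by apply/measurable_EFinP.
  - by apply/measurable_EFinP; apply: measurable_funM => //; exact: measurable_cst.
  - by move=> x _; rewrite -EFinM lee_fin.
by move=> x _; exact: efin_ge0.
Qed.

Lemma int_leZ2 (F G1 G2 : T -> R) (c1 c2 : R) : (0 <= c1)%R -> (0 <= c2)%R ->
  measurable_fun setT F -> measurable_fun setT G1 -> measurable_fun setT G2 ->
  (forall x, 0 <= F x)%R -> (forall x, 0 <= G1 x)%R -> (forall x, 0 <= G2 x)%R ->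
  (forall x, F x <= c1 * G1 x + c2 * G2 x)%R ->
  \int[P]_x (F x)%:E <= c1%:E * \int[P]_x (G1 x)%:E + c2%:E * \int[P]_x (G2 x)%:E.
Proof.
move=> c10 c20 mF mG1 mG2 F0 G10 G20 FG.
have mcG1 : measurable_fun setT (fun x => (c1 * G1 x)%:E).
  by apply/measurable_EFinP; apply: measurable_funM => //; exact: measurable_cst.
have mcG2 : measurable_fun setT (fun x => (c2 * G2 x)%:E).
  by apply/measurable_EFinP; apply: measurable_funM => //; exact: measurable_cst.
apply: (@le_trans _ _ (\int[P]_x ((c1 * G1 x)%:E + (c2 * G2 x)%:E))).
  apply: ge0_le_integral => //.
  - by move=> x _; exact: efin_ge0.
  - by apply/measurable_EFinP.
  - exact: emeasurable_funD.
  - by move=> x _; rewrite -EFinD lee_fin.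
rewrite ge0_integralD //; last 2 first.
- by move=> x _; apply: efin_ge0; exact: mulr_ge0.
- by move=> x _; apply: efin_ge0; exact: mulr_ge0.
rewrite (eq_integral (fun x => c1%:E * (G1 x)%:E)); last by move=> x _; rewrite EFinM.
rewrite [X in _ + X <= _](eq_integral (fun x => c2%:E * (G2 x)%:E)); last by move=> x _; rewrite EFinM.
rewrite !ge0_integralZl_EFin //.
- by move=> x _; exact: efin_ge0.
- by apply/measurable_EFinP.
- by move=> x _; exact: efin_ge0.
- by apply/measurable_EFinP.
Qed.

Definition Sq (f g : T -> R) := \int[P]_x ((f x - g x) ^+ 2)%:E.

Lemma msq (f g : T -> R) : measurable_fun setT f -> measurable_fun setT g ->
  measurable_fun setT (fun x => (f x - g x) ^+ 2)%R.
Proof. by move=> mf mg; apply: measurable_funX; exact: measurable_funB. Qed.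

Lemma Sq_ge0 f g : 0 <= Sq f g.
Proof. by apply: integral_ge0 => x _; rewrite lee_fin sqr_ge0. Qed.

Lemma Sq_sym f g : Sq f g = Sq g f.
Proof. by apply: eq_integral => x _; rewrite -sqrrN opprB. Qed.

Lemma Sq_self f : Sq f f = 0.
Proof.
rewrite /Sq (eq_integral (cst 0%R)) ?integral0 // => x _.
by rewrite subrr expr0n.
Qed.

Lemma Sq_tri f g h : measurable_fun setT f -> measurable_fun setT g ->
  measurable_fun setT h -> Sq f h <= 2%:E * Sq f g + 2%:E * Sq g h.
Proof.
move=> mf mg mh; apply: (int_leZ2 (c1 := 2%R) (c2 := 2%R)) => //; try exact: msq.
- by move=> x; rewrite sqr_ge0.
- by move=> x; rewrite sqr_ge0.
- by move=> x; rewrite sqr_ge0.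
- move=> x; set a := f x; set b := g x; set c := h x.
  suff : (0 <= 2 * (a - b) ^+ 2 + 2 * (b - c) ^+ 2 - (a - c) ^+ 2)%R by lra.
  have -> : (2 * (a - b) ^+ 2 + 2 * (b - c) ^+ 2 - (a - c) ^+ 2 = (a - 2 * b + c) ^+ 2)%R by ring.
  exact: sqr_ge0.
Qed.

Lemma ebound (a b : \bar R) (c1 c2 e1 e2 : R) : (0 <= c1)%R -> (0 <= c2)%R ->
  0 <= a -> 0 <= b -> a <= e1%:E -> b <= e2%:E ->
  c1%:E * a + c2%:E * b <= (c1 * e1 + c2 * e2)%:E.
Proof.
move=> c10 c20; case: a => [a||] //; case: b => [b||] //.
move=> a0 b0 ae be; rewrite -[_ * a%:E]EFinM -[_ * b%:E]EFinM -EFinD lee_fin.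
rewrite lee_fin in ae; rewrite lee_fin in be.
have a0' : (0 <= a)%R by rewrite -lee_fin.
have b0' : (0 <= b)%R by rewrite -lee_fin.
nra.
Qed.

Definition Appx (f : T -> R) := measurable_fun setT f /\
  forall e : R, (0 < e)%R -> exists p, Trig p /\ Sq f p < e%:E.

Lemma Appx_trig p : Trig p -> Appx p.
Proof.
move=> tp; split; first exact: Trig_meas.
by move=> e e0; exists p; split => //; rewrite Sq_self lte_fin.
Qed.

Lemma AppxD f g : Appx f -> Appx g -> Appx (fun x => f x + g x)%R.
Proof.
move=> [mf hf] [mg hg]; split; first exact: measurable_funD.
move=> e e0.
have e8 : (0 < e / 8)%R by rewrite divr_gt0.
have [p [tp hp]] := hf _ e8; have [q [tq hq]] := hg _ e8.
exists (fun x => p x + q x)%R; split; first exact: TrigD.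
have mp := Trig_meas tp; have mq := Trig_meas tq.
apply: (le_lt_trans (int_leZ2 (c1 := 2%R) (c2 := 2%R) _ _ _ (msq mf mp) (msq mg mq) _ _ _ _)) => //.
- by apply: msq; exact: measurable_funD.
- by move=> x; rewrite sqr_ge0.
- by move=> x; rewrite sqr_ge0.
- by move=> x; rewrite sqr_ge0.
- move=> x; set a := f x; set b := g x; set c := p x; set d := q x.
  suff : (0 <= 2 * (a - c) ^+ 2 + 2 * (b - d) ^+ 2 - (a + b - (c + d)) ^+ 2)%R by lra.
  have -> : (2 * (a - c) ^+ 2 + 2 * (b - d) ^+ 2 - (a + b - (c + d)) ^+ 2 = (a - c - (b - d)) ^+ 2)%R by ring.
  exact: sqr_ge0.
apply: (le_lt_trans (ebound _ _ (Sq_ge0 _ _) (Sq_ge0 _ _) (ltW hp) (ltW hq))) => //.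
by rewrite lte_fin; lra.
Qed.

Lemma AppxZ c f : Appx f -> Appx (fun x => c * f x)%R.
Proof.
move=> [mf hf]; split.
  by apply: measurable_funM => //; exact: measurable_cst.
move=> e e0.
have e' : (0 < e / 2 / (c ^+ 2 + 1))%R by rewrite !divr_gt0 // ltr_wpDl ?sqr_ge0.
have [p [tp hp]] := hf _ e'.
exists (fun x => c * p x)%R; split; first exact: TrigZ.
have mp := Trig_meas tp.
apply: (le_lt_trans (int_leZ1 (c := (c ^+ 2 + 1)%R) _ _ (msq mf mp) _ _ _)) => //.
- by rewrite addr_ge0 ?sqr_ge0.
- by apply: msq; apply: measurable_funM => //; exact: measurable_cst.
- by move=> x; rewrite sqr_ge0.
- by move=> x; rewrite sqr_ge0.
- move=> x; rewrite -mulrBr exprMn ler_wpM2r ?sqr_ge0 //.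
  by rewrite lerDl.
have c1 : (0 < c ^+ 2 + 1)%R by rewrite ltr_wpDl ?sqr_ge0.
rewrite -/(Sq f p).
move: hp (Sq_ge0 f p); case: (Sq f p) => [s||] //= hs _.
rewrite -EFinM lte_fin; rewrite lte_fin in hs.
rewrite -(ltr_pM2l c1) in hs.
apply: (lt_le_trans hs).
have -> : ((c ^+ 2 + 1) * (e / 2 / (c ^+ 2 + 1)) = e / 2)%R by field; rewrite gt_eqF.
lra.
Qed.

Lemma sq_bound (a b M : R) : (`|a| <= M)%R -> (a ^+ 2 * b ^+ 2 <= (M ^+ 2 + 1) * b ^+ 2)%R.
Proof.
move=> aM; apply: ler_wpM2r; first exact: sqr_ge0.
rewrite -(real_normK (num_real a)); have h0 := normr_ge0 a; nra.
Qed.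

Lemma AppxM f g M : Appx f -> (forall x, `|f x| <= M)%R -> Appx g ->
  Appx (fun x => f x * g x)%R.
Proof.
move=> [mf hf] fM [mg hg]; split; first exact: measurable_funM.
move=> e e0.
have M1 : (0 < M ^+ 2 + 1)%R by rewrite ltr_wpDl ?sqr_ge0.
have eM : (0 < e / 8 / (M ^+ 2 + 1))%R by rewrite !divr_gt0.
have [p [tp hp]] := hg _ eM.
have [K pK] := Trig_bound tp.
have K1 : (0 < K ^+ 2 + 1)%R by rewrite ltr_wpDl ?sqr_ge0.
have eK : (0 < e / 8 / (K ^+ 2 + 1))%R by rewrite !divr_gt0.
have [r [tr hr]] := hf _ eK.
exists (fun x => r x * p x)%R; split; first exact: TrigM.
have mp := Trig_meas tp; have mr := Trig_meas tr.
apply: (le_lt_trans (int_leZ2 (c1 := (2 * (M ^+ 2 + 1))%R) (c2 := (2 * (K ^+ 2 + 1))%R)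
   _ _ _ (msq mg mp) (msq mf mr) _ _ _ _)).
- by rewrite mulr_ge0 // ltW.
- by rewrite mulr_ge0 // ltW.
- by apply: msq; exact: measurable_funM.
- by move=> x; rewrite sqr_ge0.
- by move=> x; rewrite sqr_ge0.
- by move=> x; rewrite sqr_ge0.
- move=> x.
  have h1 := sq_bound (g x - p x) (fM x).
  have h2 := sq_bound (f x - r x) (pK x).
  rewrite -!exprMn in h1 h2.
  set u := (f x * (g x - p x))%R in h1; set v := (p x * (f x - r x))%R in h2.
  have -> : (f x * g x - r x * p x = u + v)%R by rewrite /u /v; ring.
  have := sqr_ge0 (u - v); nra.
apply: (le_lt_trans (ebound _ _ (Sq_ge0 _ _) (Sq_ge0 _ _) (ltW hp) (ltW hr))).
- by rewrite mulr_ge0 // ltW.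
- by rewrite mulr_ge0 // ltW.
rewrite lte_fin.
have -> : (2 * (M ^+ 2 + 1) * (e / 8 / (M ^+ 2 + 1)) +
   2 * (K ^+ 2 + 1) * (e / 8 / (K ^+ 2 + 1)) = e / 2)%R.
  by field; rewrite !gt_eqF.
lra.
Qed.

End Appx.

Section Lim.
Variables (R : realType) (Q : lmodType R) (OmR : Q -> Q -> R).
Local Notation T := (QhatM OmR).
Variable P : probability T R.
Local Notation Appx := (Appx P).
Local Notation Sq := (Sq P).

Local Open Scope ereal_scope.

Lemma efin_mul_lt (c : R) (a : \bar R) : 0 <= a -> a < +oo -> c%:E * a < +oo.
Proof. by case: a => [a||] // _ _; rewrite -EFinM ltry. Qed.

Lemma Appx_lim (h_ : nat -> T -> R) (h G : T -> R) :
  (forall n, Appx (h_ n)) -> measurable_fun setT h -> measurable_fun setT G ->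
  \int[P]_x ((G x) ^+ 2)%:E < +oo ->
  (forall n x, `|h_ n x| <= G x)%R -> (forall x, `|h x| <= G x)%R ->
  (forall x, h_ ^~ x @ \oo --> h x) -> Appx h.
Proof.
move=> hA mh mG iG hG hhG hcvg; split => // e e0.
have mF n : measurable_fun setT (fun x => ((h_ n x - h x) ^+ 2)%:E).
  by apply/measurable_EFinP; apply: msq => //; exact: (hA n).1.
have mg : measurable_fun setT (fun x => (4 * G x ^+ 2)%:E).
  apply/measurable_EFinP; apply: measurable_funM; first exact: measurable_cst.
  exact: measurable_funX.
have f_f : {ae P, forall x, setT x -> (fun n => ((h_ n x - h x) ^+ 2)%:E) @ \oo --> (cst 0 x : \bar R)}.
  apply: aeW => x _; apply: cvg_EFin; first exact: nearW.
  rewrite /comp /=.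
  rewrite [X in X @ \oo --> _](_ : _ = ((h_^~x - cst (h x)) \* (h_^~x - cst (h x)))%R); last first.
    by apply/funext => n; rewrite /= expr2.
  suff : ((h_^~x - cst (h x)) \* (h_^~x - cst (h x)))%R @ \oo --> ((h x - h x) * (h x - h x))%R.
    by rewrite subrr mul0r.
  by apply: cvgM; apply: cvgB => //; exact: cvg_cst.
have ig : P.-integrable setT (fun x => (4 * G x ^+ 2)%:E).
  apply/integrableP; split => //.
  rewrite (eq_integral (fun x => 4%:E * ((G x) ^+ 2)%:E)); last first.
    by move=> x _; rewrite abse_EFin ger0_norm ?EFinM // mulr_ge0 // sqr_ge0.
  rewrite ge0_integralZl_EFin //; last 2 first.
  - by move=> x _; apply: efin_ge0; exact: sqr_ge0.
  - by apply/measurable_EFinP; exact: measurable_funX.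
  apply: efin_mul_lt iG.
  by apply: integral_ge0 => x _; exact: efin_ge0 (sqr_ge0 (G x)).
have f_g : {ae P, forall x n, setT x -> `|((h_ n x - h x) ^+ 2)%:E| <= (4 * G x ^+ 2)%:E}.
  apply: aeW => x n _; rewrite abse_EFin lee_fin ger0_norm ?sqr_ge0 //.
  have a1 := hG n x; have a2 := hhG x.
  have b1 : ((h_ n x) ^+ 2 <= (G x) ^+ 2)%R.
    rewrite -(real_normK (num_real (h_ n x))); have := normr_ge0 (h_ n x); nra.
  have b2 : ((h x) ^+ 2 <= (G x) ^+ 2)%R.
    rewrite -(real_normK (num_real (h x))); have := normr_ge0 (h x); nra.
  have := sqr_ge0 (h_ n x + h x); nra.
have [_ H _] := @dominated_convergence _ _ _ P setT measurableT
  (fun n x => ((h_ n x - h x) ^+ 2)%:E) (cst 0) (fun x => (4 * G x ^+ 2)%:E)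
  mF (measurable_cst _) f_f ig f_g.
have e8 : (0 < e / 8)%R by rewrite divr_gt0.
have [N _ /(_ N (leqnn N)) /= HN] := H _ (@nbhs_open_ereal_lt _ 0%R (fun _ => e / 8)%R e8).
have [p [tp hp]] := (hA N).2 _ e8.
exists p; split => //.
have mp := Trig_meas tp.
apply: (le_lt_trans (Sq_tri P mh (hA N).1 mp)).
rewrite Sq_sym.
have HN' : Sq (h_ N) h <= (e / 8)%:E.
  apply: ltW; move: HN; rewrite /Sq.
  by rewrite (eq_integral (fun x => ((h_ N x - h x) ^+ 2)%:E)) // => x _; rewrite subr0 ger0_norm ?sqr_ge0.
apply: (le_lt_trans (ebound _ _ (Sq_ge0 _ _ _) (Sq_ge0 _ _ _) HN' (ltW hp))) => //.
rewrite lte_fin; lra.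
Unshelve. all: by end_near.
Qed.

End Lim.

Section Newton.
Variable R : realType.

Fixpoint nw (n : nat) (t : R) : R :=
  if n is m.+1 then nw m t + (t - nw m t ^+ 2) / 2 else 0.

Lemma nw_bounds n t : 0 <= t <= 1 -> 0 <= nw n t <= Num.sqrt t.
Proof.
move=> /andP[t0 t1]; set s := Num.sqrt t.
have s0 : 0 <= s by rewrite sqrtr_ge0.
have s1 : s <= 1 by rewrite -sqrtr1 ler_sqrt.
have ts : t = s ^+ 2 by rewrite sqr_sqrtr.
elim: n => [|n /andP[p0 ps]] /=; first by rewrite lexx s0.
set p := nw n t in p0 ps *; rewrite ts.
have h1 : 0 <= (s - p) * (s + p) by apply: mulr_ge0; lra.
apply/andP; split; first nra.
have : 0 <= (s - p) * (1 - (s + p) / 2) by apply: mulr_ge0; lra.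
nra.
Qed.

Lemma nw_err n t : 0 <= t <= 1 ->
  Num.sqrt t - nw n t <= Num.sqrt t * (1 - Num.sqrt t / 2) ^+ n.
Proof.
move=> t01; set s := Num.sqrt t.
have s0 : 0 <= s by rewrite sqrtr_ge0.
have ts : t = s ^+ 2 by rewrite sqr_sqrtr //; case/andP: t01.
have s1 : s <= 1 by rewrite -sqrtr1 ler_sqrt //; case/andP: t01.
elim: n => [|n ih] /=; first by rewrite expr0 mulr1 subr0.
have /andP[p0 ps] := nw_bounds n t01.
set p := nw n t in ih p0 ps *.
have r0 : 0 <= 1 - s / 2 by lra.
rewrite exprS.
have -> : s - (p + (t - p ^+ 2) / 2) = (s - p) * (1 - (s + p) / 2) by rewrite ts; ring.
apply: (@le_trans _ _ ((s - p) * (1 - s / 2))).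
  have ps' : p <= s := ps. apply: ler_wpM2l; lra.
rewrite exprS mulrCA (mulrC (s - p)); by apply: ler_wpM2l.
Qed.

Lemma nw_cvg t : 0 <= t <= 1 -> nw ^~ t @ \oo --> Num.sqrt t.
Proof.
move=> t01; set s := Num.sqrt t.
have s0 : 0 <= s by rewrite sqrtr_ge0.
have s1 : s <= 1 by rewrite -sqrtr1 ler_sqrt //; case/andP: t01.
have H : (fun n => s * (1 - s / 2) ^+ n) @ \oo --> 0.
  case: (ltP 0 s) => hs.
    have r1 : `|1 - s / 2| < 1 by rewrite ger0_norm; lra.
    rewrite -(mulr0 s); apply: cvgM; first exact: cvg_cst.
    exact: cvg_expr.
  have -> : s = 0 by lra.
  rewrite (_ : (fun n => _) = cst 0); first exact: cvg_cst.
  by apply/funext => n; rewrite mul0r.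
apply: (@squeeze_cvgr _ _ _ _ (fun n => s - s * (1 - s / 2) ^+ n) (cst s)).
- apply: nearW => n; have /andP[_ h2] := nw_bounds n t01.
  by rewrite h2 andbT lerBlDr addrC -lerBlDr nw_err.
- rewrite -[X in _ --> X]subr0; apply: cvgB => //; exact: cvg_cst.
- exact: cvg_cst.
Qed.

End Newton.

Section Abs.
Variables (R : realType) (Q : lmodType R) (OmR : Q -> Q -> R).
Local Notation T := (QhatM OmR).
Variable P : probability T R.
Local Notation Appx := (Appx P).

Lemma Appx_ext f g : (forall x, f x = g x) -> Appx g -> Appx f.
Proof. by move=> fg; rewrite (_ : f = g) //; apply/funext. Qed.

Lemma int_cst1 : (\int[P]_x (((cst 1 : T -> R) x) ^+ 2)%:E < +oo)%E.
Proof.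
rewrite (eq_integral (cst 1%E)); last by move=> x _; rewrite /= expr1n.
rewrite integral_cst // mul1e; apply: (le_lt_trans (probability_le1 P measurableT)); exact: ltry.
Qed.

Lemma Appx_nw u n : Appx u -> (forall x, 0 <= u x <= 1) ->
  Appx (fun x => nw n (u x)).
Proof.
move=> hu u01; elim: n => [|n ih] /=.
  by apply: Appx_trig; exact: Trig_cst.
have bnd x : `|nw n (u x)| <= 1.
  have /andP[h1 h2] := nw_bounds n (u01 x).
  rewrite ger0_norm // (le_trans h2) // -sqrtr1 ler_sqrt //.
  by case/andP: (u01 x).
apply: (Appx_ext (g := fun x => nw n (u x) + 2^-1 * (u x + (-1) * (nw n (u x) * nw n (u x))))).
  by move=> x; rewrite expr2; ring.
have h2 := AppxM ih bnd ih.
exact: AppxD ih (AppxZ _ (AppxD hu (AppxZ _ h2))).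
Qed.

Lemma Appx_abs1 g : Appx g -> (forall x, `|g x| <= 1) -> Appx (fun x => `|g x|).
Proof.
move=> hg g1.
have hu : Appx (fun x => g x * g x) := AppxM hg g1 hg.
have u01 x : 0 <= g x * g x <= 1.
  rewrite -expr2 -(real_normK (num_real (g x))).
  have := g1 x; have := normr_ge0 (g x); move=> a b.
  apply/andP; split; nra.
apply: (@Appx_lim _ _ _ P (fun n x => nw n (g x * g x)) _ (cst 1)).
- by move=> n; exact: Appx_nw.
- apply: (@measurableT_comp _ _ _ _ _ _ (@Num.Def.normr _ R)); [exact: normr_measurable | exact: (proj1 hg)].
- exact: measurable_cst.
- exact: int_cst1.
- move=> n x /=; have /andP[h1 h2] := nw_bounds n (u01 x).
  rewrite ger0_norm // (le_trans h2) // -sqrtr1 ler_sqrt //.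
  by case/andP: (u01 x).
- by move=> x /=; rewrite normr_id.
- move=> x; rewrite -[X in _ --> X]sqrtr_sqr expr2; exact: nw_cvg.
Qed.

Lemma Appx_abs h M : Appx h -> (forall x, `|h x| <= M) -> Appx (fun x => `|h x|).
Proof.
move=> hh hM.
have M1 : 0 < `|M| + 1 by rewrite ltr_wpDl.
have g1 x : `|(`|M| + 1)^-1 * h x| <= 1.
  rewrite normrM normfV (ger0_norm (ltW M1)).
  have c1 : (`|M| + 1)^-1 * (`|M| + 1) = 1 by rewrite mulVf // gt_eqF.
  have c0 : 0 <= (`|M| + 1)^-1 by rewrite invr_ge0 ltW.
  have := hM x; have := ler_norm M; nra.
have := AppxZ (`|M| + 1) (Appx_abs1 (AppxZ ((`|M| + 1)^-1) hh) g1).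
apply: Appx_ext => x.
by rewrite normrM ger0_norm ?invr_ge0 ?ltW // mulrA mulfV ?gt_eqF // mul1r.
Qed.

End Abs.

Section Sigma.
Variables (R : realType) (Q : lmodType R) (OmR : Q -> Q -> R).
Local Notation T := (QhatM OmR).
Variable P : probability T R.
Local Notation Appx := (Appx P).

Definition Dset (A : set T) := measurable A /\ Appx (\1_A : T -> R).

Lemma indic_le1 (A : set T) x : `|(\1_A : T -> R) x| <= 1.
Proof. by rewrite indicE; case: (x \in A); rewrite ?normr1 ?normr0. Qed.

Lemma Dset_T : Dset setT.
Proof.
split => //; apply: (Appx_ext (g := fun _ => 1)); first by move=> x; rewrite indicE mem_set.
by apply: Appx_trig; exact: Trig_cst.
Qed.

Lemma Dset_C A : Dset A -> Dset (~` A).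
Proof.
move=> [mA hA]; split; first exact: measurableC.
apply: (Appx_ext (g := fun x => 1 + (-1) * (\1_A : T -> R) x)).
  by move=> x; rewrite !indicE in_setC; case: (x \in A) => /=; ring.
apply: AppxD (AppxZ _ hA); apply: Appx_trig; exact: Trig_cst.
Qed.

Lemma Dset_0 : Dset set0.
Proof. by rewrite -setCT; apply: Dset_C; exact: Dset_T. Qed.

Lemma Dset_I A B : Dset A -> Dset B -> Dset (A `&` B).
Proof.
move=> [mA hA] [mB hB]; split; first exact: measurableI.
rewrite indicI; exact: AppxM hA (indic_le1 A) hB.
Qed.

Lemma Dset_U A B : Dset A -> Dset B -> Dset (A `|` B).
Proof.
move=> hA hB; rewrite -[A `|` B]setCK setCU; apply: Dset_C.
by apply: Dset_I; apply: Dset_C.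
Qed.

Lemma Dset_bigcup (F : nat -> set T) : (forall n, Dset (F n)) -> Dset (\bigcup_n F n).
Proof.
move=> hF.
pose U n := [set x | exists2 i, (i < n)%N & F i x].
have U0 : U 0%N = set0 by apply/seteqP; split => x // [].
have US n : U n.+1 = U n `|` F n.
  apply/seteqP; split => x /=.
    move=> [i]; rewrite ltnS leq_eqVlt => /orP[/eqP -> |] h; first by right.
    by left; exists i.
  by move=> [[i hi h]|h]; [exists i => //; exact: ltnW|exists n].
have DU n : Dset (U n).
  elim: n => [|n ih]; first by rewrite U0; exact: Dset_0.
  by rewrite US; exact: Dset_U.
split; first by apply: bigcupT_measurable => n; exact: (hF n).1.
apply: (@Appx_lim _ _ _ P (fun n => \1_(U n)) _ (cst 1)).
- by move=> n; exact: (DU n).2.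
- apply/measurable_indicP; apply: bigcupT_measurable => n; exact: (hF n).1.
- exact: measurable_cst.
- exact: int_cst1.
- by move=> n x; exact: indic_le1.
- by move=> x; exact: indic_le1.
- move=> x; apply: cvg_near_cst.
  case: (pselect ((\bigcup_n F n) x)) => [[k _ Fk]|nF].
    near=> n.
    have kn : (k < n)%N by near: n; exact: nbhs_infty_gt.
    have h1 : U n x by exists k.
    have h2 : (\bigcup_n F n) x by exists k.
    by rewrite !indicE (mem_set h1) (mem_set h2).
  near=> n; rewrite !indicE !memNset //.
  by move=> [i _ h]; apply: nF; exists i.
Unshelve. all: by end_near.
Qed.

Lemma Dset_sigma : sigma_algebra setT Dset.
Proof.
split; first exact: Dset_0.
  by move=> A hA; rewrite setTD; exact: Dset_C.
exact: Dset_bigcup.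
Qed.

End Sigma.

Section RealFacts.
Variable R : realType.

Lemma wform (a k : R) : 0 <= k ->
  let v := k * (2^-1 * (a + `|a|)) in
  let w := 2^-1 * (1 + v + (-1) * `|1 + (-1) * v|) in
  [/\ 0 <= w <= 1, (a <= 0 -> w = 0) & (1 <= k * a -> w = 1)].
Proof.
move=> k0 v w.
have [a0|a0] := leP a 0.
  have va : v = 0 by rewrite /v ler0_norm //; ring.
  have w0 : w = 0 by rewrite /w va mulr0 addr0 normr1; ring.
  split.
  - by rewrite w0 lexx ler01.
  - by [].
  - by move=> h; nra.
have va : v = k * a.
  by rewrite /v (ger0_norm (ltW a0)); field.
have v0 : 0 <= v by rewrite va; apply: mulr_ge0 => //; exact: ltW.
have [v1|v1] := leP 1 v.
  have w1 : w = 1.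
    by rewrite /w ler0_norm; [field|lra].
  split.
  - by rewrite w1 ler01 lexx.
  - by move=> h; lra.
  - by [].
have wv : w = v by rewrite /w ger0_norm; [field|lra].
split.
- by rewrite wv v0 ltW.
- by move=> h; lra.
- by rewrite -va => h; lra.
Qed.

Lemma sin_pos_char (y c : R) :
  c < y <-> exists m : nat, forall n : nat, 0 < sin (((m + n).+1%:R)^-1 * (y - c)).
Proof.
split.
  move=> cy; set d := y - c.
  have d0 : 0 < d by rewrite /d subr_gt0.
  have pi0 := pi_gt0 R.
  exists (Num.Def.trunc (d / pi)) => n.
  set N := ((_ + n).+1)%:R.
  have N0 : 0 < N by rewrite ltr0n.
  have h1 : d / pi < N.
    apply: (lt_le_trans (truncnS_gt _)); rewrite ler_nat ltnS; exact: leq_addr.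
  have h2 : d < pi * N by rewrite -ltr_pdivrMl // mulrC.
  apply: sin_gt0_pi; apply/andP; split; first by rewrite mulr_gt0 // invr_gt0.
  by rewrite ltr_pdivrMl // mulrC.
move=> [m hm]; rewrite ltNge; apply/negP => yc.
set d := c - y.
have d0 : 0 <= d by rewrite /d subr_ge0.
have pi0 := pi_gt0 R.
set n := Num.Def.trunc (d / pi).
have := hm n; set N := ((m + n).+1)%:R.
have N0 : 0 < N by rewrite ltr0n.
have h1 : d / pi < N.
  apply: (lt_le_trans (truncnS_gt _)); rewrite ler_nat ltnS; exact: leq_addl.
have h2 : d < pi * N by rewrite -ltr_pdivrMl // mulrC.
have -> : N^-1 * (y - c) = - (N^-1 * d) by rewrite /d; ring.
rewrite sinN oppr_gt0 ltNge => /negP; apply; apply: sin_ge0_pi.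
apply/andP; split; first by rewrite mulr_ge0 // invr_ge0 ltW.
by rewrite ler_pdivrMl // mulrC ltW.
Qed.

End RealFacts.

Section Gen.
Variables (R : realType) (Q : lmodType R) (OmR : Q -> Q -> R).
Local Notation T := (QhatM OmR).
Variable P : probability T R.
Local Notation Appx := (Appx P).
Local Notation Dset := (Dset P).

Lemma mpos (f : T -> R) : measurable_fun setT f -> measurable [set x | 0 < f x].
Proof.
move=> mf; have := mf measurableT _ (measurable_itv `]0, +oo[).
rewrite setTI; congr measurable; apply/seteqP; split => x /=;
  by rewrite in_itv /= andbT.
Qed.

Lemma Dset_pos t : Trig t -> Dset [set x | 0 < t x].
Proof.
move=> tt; split; first by apply: mpos; exact: Trig_meas.
have [K tK] := Trig_bound tt.
have At := Appx_trig P tt.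
pose mx x := 2^-1 * (t x + `|t x|).
have Amx : Appx mx := AppxZ _ (AppxD At (Appx_abs At tK)).
pose v (k : nat) x := k%:R * mx x.
pose w (k : nat) x := 2^-1 * (1 + v k x + (-1) * `|1 + (-1) * v k x|).
have Aw k : Appx (w k).
  have Av : Appx (v k) := AppxZ _ Amx.
  have Ab : Appx (fun x => 1 + (-1) * v k x) :=
    AppxD (Appx_trig P (Trig_cst _ 1)) (AppxZ _ Av).
  have bnd x : `|1 + (-1) * v k x| <= 1 + k%:R * K.
    rewrite (le_trans (ler_normD _ _)) // normr1 lerD2l normrM normrN1 mul1r.
    rewrite /v normrM (ger0_norm (ler0n R k)) ler_wpM2l //.
    rewrite /mx (le_trans _ (tK x)) //.
    have hn : - t x <= `|t x| by rewrite -normrN ler_norm.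
    have hp : t x <= `|t x| := ler_norm (t x).
    have h0 : 0 <= 2^-1 * (t x + `|t x|) by apply: mulr_ge0; [rewrite invr_ge0|lra].
    rewrite (ger0_norm h0); lra.
  exact: AppxZ _ (AppxD (AppxD (Appx_trig P (Trig_cst _ 1)) Av) (AppxZ _ (Appx_abs Ab bnd))).
have wP k x := wform (t x) (ler0n R k).
apply: (@Appx_lim _ _ _ P w _ (cst 1)).
- exact: Aw.
- apply/measurable_indicP; apply: mpos; exact: Trig_meas.
- exact: measurable_cst.
- exact: int_cst1.
- move=> k x; have [/andP[w0 w1] _ _] := wP k x.
  by rewrite ger0_norm.
- by move=> x; exact: indic_le1.
- move=> x; apply: cvg_near_cst.
  have [tx0|tx0] := leP (t x) 0.
    near=> k; have [_ h _] := wP k x.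
    rewrite /w /v /mx (h tx0).
    by rewrite indicE memNset //= => h'; lra.
  near=> k.
  have hk : (t x)^-1 < k%:R by near: k; exact: nbhs_infty_gtr.
  have [_ _ h] := wP k x.
  rewrite /w /v /mx h; first by rewrite indicE mem_set.
  by rewrite -ler_pdivrMr // div1r ltW.
Unshelve. all: by end_near.
Qed.

Lemma Dset_gt l c : is_Qstar OmR l -> Dset [set x | c < qh x l].
Proof.
move=> hl.
pose S (n : nat) := [set x : T | 0 < sin (qh x (fun phi => (n.+1%:R)^-1 * l phi) - (n.+1%:R)^-1 * c)].
have DS n : Dset (S n).
  apply: Dset_pos; apply: Trig_sinB; exact: is_QstarZ.
have -> : [set x : T | c < qh x l] = \bigcup_m ~` \bigcup_n ~` S (m + n)%N.
  apply/seteqP; split => x /=.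
    move=> /sin_pos_char [m hm]; exists m => //; rewrite setC_bigcup => n _ /=.
    rewrite /S /= qhZ // -mulrBr; move=> h; exact: h (hm n).
  move=> [m _]; rewrite setC_bigcup => hm; apply/sin_pos_char; exists m => n.
  have := hm n I; rewrite /S /= qhZ // -mulrBr => h.
  by case: (boolP (0 < _)) => // nb; exfalso; apply: h => h'; move: nb; rewrite h'.
apply: Dset_bigcup => m; apply: Dset_C; apply: Dset_bigcup => n; exact: Dset_C.
Qed.

Lemma Dset_pre l B : is_Qstar OmR l -> measurable B ->
  Dset ((fun x : T => qh x l) @^-1` B).
Proof.
move=> hl mB.
pose E := [set B : set R | Dset ((fun x : T => qh x l) @^-1` B)].
have sE : sigma_algebra setT E.
  split.
  - by rewrite /E /= preimage_set0; exact: Dset_0.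
  - by move=> A hA; rewrite /E /= setTD -preimage_setC; exact: Dset_C.
  - by move=> F hF; rewrite /E /= preimage_bigcup; exact: Dset_bigcup.
have GE : RGenOInfty.G (R:=R) `<=` E.
  move=> A [c ->]; rewrite /E /=.
  rewrite (_ : _ @^-1` _ = [set x | c < qh x l]); first exact: Dset_gt.
  by apply/seteqP; split => x /=; rewrite in_itv /= andbT.
have : (RGenOInfty.G (R:=R)).-sigma.-measurable B by rewrite -(RGenOInfty.measurableE R).
move=> hB; exact: (smallest_sub sE GE hB).
Qed.

Lemma Dset_all A : measurable A -> Dset A.
Proof.
move=> mA; apply: (smallest_sub (Dset_sigma P)) mA.
by move=> C [l [hl [B [mB ->]]]]; exact: Dset_pre.
Qed.

End Gen.

Import HBNNSimple.

Section L2.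
Variables (R : realType) (Q : lmodType R) (OmR : Q -> Q -> R).
Local Notation T := (QhatM OmR).
Variable P : probability T R.
Local Notation Appx := (Appx P).

Lemma Appx_indic A : measurable A -> Appx (\1_A : T -> R).
Proof. by move=> mA; exact: (Dset_all P mA).2. Qed.

Lemma Appx_sum n (F : 'I_n -> T -> R) : (forall i, Appx (F i)) ->
  Appx (fun x => \sum_(i < n) F i x).
Proof.
elim: n F => [|n ih] F hF.
  apply: (Appx_ext (g := fun _ => 0)); first by move=> x; rewrite big_ord0.
  by apply: Appx_trig; exact: Trig_cst.
apply: (Appx_ext (g := fun x => \sum_(i < n) F (widen_ord (leqnSn n) i) x + F ord_max x)).
  by move=> x; rewrite big_ord_recr.
by apply: AppxD => //; apply: ih => i.
Qed.

Lemma Appx_nnsfun (s : {nnsfun T >-> R}) : Appx s.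
Proof.
apply: Appx_ext; first exact: fimfunEord.
apply: Appx_sum => i; apply: AppxZ; apply: Appx_indic.
rewrite -[X in measurable X]setTI; apply: (measurable_funP s) => //.
Qed.

Local Open Scope ereal_scope.

Lemma Appx_nonneg (g : T -> R) : measurable_fun setT g -> (forall x, 0 <= g x)%R ->
  \int[P]_x ((g x) ^+ 2)%:E < +oo -> Appx g.
Proof.
move=> mg g0 ig.
have mg' : measurable_fun setT (EFin \o g) by apply/measurable_EFinP.
have g0' : forall x, setT x -> 0 <= (EFin \o g) x by move=> x _; exact: efin_ge0.
pose s := nnsfun_approx measurableT mg'.
have cv x : (fun n => s n x) @ \oo --> g x.
  exact: (fine_cvg (cvg_nnsfun_approx measurableT mg' g0' (I : setT x))).
have nd x : {homo (fun n => s n x) : n m / (n <= m)%N >-> (n <= m)%R}.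
  by move=> m n mn; have /lefP := nd_nnsfun_approx measurableT mg' mn; apply.
have sg n x : (s n x <= g x)%R.
  have := nondecreasing_cvgn_le (nd x) (cvgP _ (cv x)) n.
  by rewrite (cvg_lim _ (cv x)).
apply: (@Appx_lim _ _ _ P (fun n => s n) g g) => //.
- by move=> n; exact: Appx_nnsfun.
- by move=> n x; rewrite ger0_norm // fun_ge0.
- by move=> x; rewrite ger0_norm.
Qed.

Lemma sq_int_le (h g : T -> R) : measurable_fun setT h -> measurable_fun setT g ->
  (forall x, `|h x| <= `|g x|)%R ->
  \int[P]_x ((g x) ^+ 2)%:E < +oo -> \int[P]_x ((h x) ^+ 2)%:E < +oo.
Proof.
move=> mh mg hg ig; apply: le_lt_trans ig.
apply: ge0_le_integral => //.
- by move=> x _; apply: efin_ge0; exact: sqr_ge0.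
- by apply/measurable_EFinP; exact: measurable_funX.
- by apply/measurable_EFinP; exact: measurable_funX.
- move=> x _; rewrite lee_fin -(real_normK (num_real (h x))) -(real_normK (num_real (g x))).
  by rewrite ler_sqr ?nnegrE ?normr_ge0.
Qed.

Lemma Appx_L2 (g : T -> R) : measurable_fun setT g ->
  \int[P]_x ((g x) ^+ 2)%:E < +oo -> Appx g.
Proof.
move=> mg ig.
have mag : measurable_fun setT (fun x => `|g x|)%R.
  by apply: (@measurableT_comp _ _ _ _ _ _ (@Num.Def.normr _ R)); [exact: normr_measurable|].
pose gp x := (2^-1 * (g x + `|g x|))%R.
pose gn x := (2^-1 * (`|g x| + (-1) * g x))%R.
have hn x : (- g x <= `|g x|)%R by rewrite -normrN ler_norm.
have hp x : (g x <= `|g x|)%R := ler_norm (g x).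
have mgp : measurable_fun setT gp.
  apply: measurable_funM; first exact: measurable_cst.
  exact: measurable_funD.
have mgn : measurable_fun setT gn.
  apply: measurable_funM; first exact: measurable_cst.
  apply: measurable_funD => //; apply: measurable_funM => //; exact: measurable_cst.
have gp0 x : (0 <= gp x)%R by rewrite /gp; have := hn x; have := hp x; lra.
have gn0 x : (0 <= gn x)%R by rewrite /gn; have := hn x; have := hp x; lra.
have Agp : Appx gp.
  apply: Appx_nonneg => //; apply: sq_int_le mgp mg _ ig => x.
  by rewrite ger0_norm // /gp; have := hn x; have := hp x; lra.
have Agn : Appx gn.
  apply: Appx_nonneg => //; apply: sq_int_le mgn mg _ ig => x.
  by rewrite ger0_norm // /gn; have := hn x; have := hp x; lra.
apply: (Appx_ext (g := fun x => gp x + (-1) * gn x)%R).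
  by move=> x; rewrite /gp /gn; field.
exact: AppxD Agp (AppxZ _ Agn).
Qed.

End L2.

Section Rep.
Variables (R : realType) (L Q : lmodType R).
Variables (br : L -> L -> R) (q : L -> Q) (bQ : L -> Q -> R).
Variables (OmR OmI : Q -> Q -> R).
Local Notation T := (QhatM OmR).
Local Notation kre := (kS_re br q bQ OmR OmI).
Local Notation kim := (kS_im br q bQ OmR OmI).

Hypothesis base : forall l, is_Qstar OmR l -> exists tau,
  forall x, kre tau x = cos (qh x l) /\ kim tau x = sin (qh x l).

Definition sre (u : seq (L * (R * R))) (x : Qhat OmR) : R :=
  \sum_(t <- u) (t.2.1 * kre t.1 x - t.2.2 * kim t.1 x).
Definition sim (u : seq (L * (R * R))) (x : Qhat OmR) : R :=
  \sum_(t <- u) (t.2.1 * kim t.1 x + t.2.2 * kre t.1 x).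

Lemma sre_cat u v x : sre (u ++ v) x = sre u x + sre v x.
Proof. by rewrite /sre big_cat. Qed.
Lemma sim_cat u v x : sim (u ++ v) x = sim u x + sim v x.
Proof. by rewrite /sim big_cat. Qed.

Lemma rep_ord u : exists n (tau : 'I_n -> L) (a b : 'I_n -> R),
  forall x, span_re br q bQ OmR OmI tau a b x = sre u x /\
            span_im br q bQ OmR OmI tau a b x = sim u x.
Proof.
pose d : L * (R * R) := (0, (0, 0)).
exists (size u), (fun i => (nth d u i).1), (fun i => (nth d u i).2.1),
  (fun i => (nth d u i).2.2) => x; split.
  by rewrite /span_re /sre (big_nth d) big_mkord.
by rewrite /span_im /sim (big_nth d) big_mkord.
Qed.

Lemma base2 l : is_Qstar OmR l -> exists tau1 tau2, forall x,
  [/\ kre tau1 x = cos (qh x l), kim tau1 x = sin (qh x l),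
      kre tau2 x = cos (qh x l) & kim tau2 x = - sin (qh x l)].
Proof.
move=> hl; have [t1 h1] := base hl.
have [t2 h2] := base (is_QstarZ (-1) hl).
exists t1, t2 => x; have [a1 b1] := h1 x; have [a2 b2] := h2 x.
by rewrite a1 b1 a2 b2 qhZ // mulN1r cosN sinN.
Qed.

Lemma rep_re s : List.Forall (fun t => is_Qstar OmR t.1) s ->
  exists u, forall x, sre u x = tp s x /\ sim u x = 0.
Proof.
elim: s => [_|t s ih /List.Forall_cons_iff [ht hs]].
  by exists [::] => x; rewrite /sre /sim /tp !big_nil.
have [u hu] := ih hs.
have [t1 [t2 h]] := base2 ht.
case: t ht h => l [a b] /= ht h.
exists ((t1, (a / 2, - (b / 2))) :: (t2, (a / 2, b / 2)) :: u) => x.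
have [u1 u2] := hu x; have [c1 s1 c2 s2] := h x.
rewrite /sre /sim /tp !big_cons /= -/(sre u x) -/(sim u x) -/(tp s x) u1 u2.
rewrite /tterm /= c1 s1 c2 s2; by split; field.
Qed.

Lemma rep_im s : List.Forall (fun t => is_Qstar OmR t.1) s ->
  exists u, forall x, sre u x = 0 /\ sim u x = tp s x.
Proof.
elim: s => [_|t s ih /List.Forall_cons_iff [ht hs]].
  by exists [::] => x; rewrite /sre /sim /tp !big_nil.
have [u hu] := ih hs.
have [t1 [t2 h]] := base2 ht.
case: t ht h => l [a b] /= ht h.
exists ((t1, (b / 2, a / 2)) :: (t2, (- (b / 2), a / 2)) :: u) => x.
have [u1 u2] := hu x; have [c1 s1 c2 s2] := h x.
rewrite /sre /sim /tp !big_cons /= -/(sre u x) -/(sim u x) -/(tp s x) u1 u2.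
rewrite /tterm /= c1 s1 c2 s2; by split; field.
Qed.

Lemma rep_trig (p1 p2 : T -> R) : Trig p1 -> Trig p2 ->
  exists n (tau : 'I_n -> L) (a b : 'I_n -> R),
  forall x, span_re br q bQ OmR OmI tau a b x = p1 x /\
            span_im br q bQ OmR OmI tau a b x = p2 x.
Proof.
move=> [s1 [hs1 e1]] [s2 [hs2 e2]].
have [u1 hu1] := rep_re hs1; have [u2 hu2] := rep_im hs2.
have [n [tau [a [b h]]]] := rep_ord (u1 ++ u2).
exists n, tau, a, b => x; have [h1 h2] := h x.
have [v1 w1] := hu1 x; have [v2 w2] := hu2 x.
by rewrite h1 h2 sre_cat sim_cat v1 w1 v2 w2 e1 e2 addr0 add0r.
Qed.

End Rep.

Unset Implicit Arguments.
Theorem proposition3p4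
  (R : realType) (L Q : lmodType R)
  (br : L -> L -> R) (q : L -> Q) (bQ : L -> Q -> R)
  (OmR OmI : Q -> Q -> R)
  (P : probability (QhatM OmR) R)
  (* [.,.] bilinear, omega non-degenerate *)
  (br_bil : bilinear_form br)
  (omega_nondeg : forall xi, (forall xi', br xi xi' / 2 - br xi' xi / 2 = 0) -> xi = 0)
  (* L = M (+) N *)
  (LMN : forall xi : L, exists m n, (forall x, br x m = 0) /\ (forall x, br n x = 0)
                               /\ xi = m + n)
  (MN0 : forall t : L, (forall x, br x t = 0) -> (forall x, br t x = 0) -> t = 0)
  (* Q = L/M with quotient map q *)
  (q_lin : forall a x y, q (a *: x + y) = a *: q x + q y)
  (q_surj : forall phi : Q, exists xi, q xi = phi)
  (q_ker : forall xi, q xi = 0 <-> (forall x, br x xi = 0))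
  (* [.,.] descended to L x Q *)
  (bQ_q : forall xi tau, bQ xi (q tau) = br xi tau)
  (* Omega = OmR + i OmI symmetric bilinear, Re Omega positive definite *)
  (OmR_bil : bilinear_form OmR) (OmI_bil : bilinear_form OmI)
  (OmR_sym : forall phi psi, OmR phi psi = OmR psi phi)
  (OmI_sym : forall phi psi, OmI phi psi = OmI psi phi)
  (OmR_pos : forall phi, phi != 0 -> 0 < OmR phi phi)
  (* admissibility *)
  (Q_cpl : Q_complete OmR) (Q_sep : Q_separable OmR)
  (OmI_cont : Qcont2 OmR OmI)
  (bQ_cont : forall xi, Qcont OmR (bQ xi))
  (Qstar_rep : forall l, is_Qstar OmR l -> exists xi, forall phi, l phi = bQ xi phi)
  (* nu_Q : the Gaussian measure with characteristic functional exp(-|l|^2/4) *)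
  (P_char : forall l, is_Qstar OmR l ->
     (\int[P]_x (cos (qh x l))%:E = (expR (- (dual_norm OmR l ^+ 2) / 4))%:E)%E /\
     (\int[P]_x (sin (qh x l))%:E = 0)%E) :
  (* density of span {k^S_tau} in L^2(Qhat, nu_Q) (complex-valued) *)
  forall (fr fi : QhatM OmR -> R),
    measurable_fun setT fr -> measurable_fun setT fi ->
    (\int[P]_x ((fr x) ^+ 2 + (fi x) ^+ 2)%:E < +oo)%E ->
    forall e : R, 0 < e ->
    exists n (tau : 'I_n -> L) (a b : 'I_n -> R),
      (\int[P]_x ((fr x - span_re br q bQ OmR OmI tau a b x) ^+ 2
                + (fi x - span_im br q bQ OmR OmI tau a b x) ^+ 2)%:E < e%:E)%E.
Proof.
move=> fr fi mfr mfi ifr e e0.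
have bil0 (V : lmodType R) (B : V -> V -> R) : bilinear_form B -> forall z, B 0 z = 0.
  move=> [hB _] z; have := hB 1 0 0 z; rewrite scale1r addr0 mul1r => h; lra.
have bil0r (V : lmodType R) (B : V -> V -> R) : bilinear_form B -> forall z, B z 0 = 0.
  move=> [_ hB] z; have := hB 1 0 0 z; rewrite scale1r addr0 mul1r => h; lra.
have base : forall l, is_Qstar OmR l -> exists tau, forall x,
    kS_re br q bQ OmR OmI tau x = cos (qh x l) /\
    kS_im br q bQ OmR OmI tau x = sin (qh x l).
  move=> l hl.
  have [xi hxi] := Qstar_rep l hl.
  have [m [n [hm [hn exi]]]] := LMN xi; rewrite exi in hxi.
  have qm : q m = 0 by apply/q_ker.
  have e1 : (fun phi => OmR (q m) phi) = (fun _ => 0).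
    by apply/funext => phi; rewrite qm bil0.
  have e2 : (fun phi => OmI (q m) phi + bQ m phi) = l.
    apply/funext => phi; have [t <-] := q_surj phi.
    rewrite qm bil0 // add0r hxi !bQ_q.
    have := (proj1 br_bil) 1 m n t; rewrite scale1r mul1r hn addr0 => ->.
    by [].
  exists m => x.
  have ar : kS_arg_re q OmR m x = 0.
    by rewrite /kS_arg_re e1 qh0 qm bil0 // mul0r subr0.
  have ai : kS_arg_im br q bQ OmR OmI m x = qh x l.
    by rewrite /kS_arg_im e2 qm bil0 // hm !mul0r !subr0.
  by rewrite /kS_re /kS_im ar ai expR0 !mul1r.
have mfr2 : measurable_fun setT (fun x => (fr x) ^+ 2) by exact: measurable_funX.
have mfi2 : measurable_fun setT (fun x => (fi x) ^+ 2) by exact: measurable_funX.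
have ifr' : (\int[P]_x ((fr x) ^+ 2)%:E < +oo)%E.
  apply: le_lt_trans ifr; apply: ge0_le_integral => //.
  - by move=> x _; apply: efin_ge0; exact: sqr_ge0.
  - by apply/measurable_EFinP.
  - by apply/measurable_EFinP; exact: measurable_funD.
  - by move=> x _; rewrite lee_fin lerDl sqr_ge0.
have ifi' : (\int[P]_x ((fi x) ^+ 2)%:E < +oo)%E.
  apply: le_lt_trans ifr; apply: ge0_le_integral => //.
  - by move=> x _; apply: efin_ge0; exact: sqr_ge0.
  - by apply/measurable_EFinP.
  - by apply/measurable_EFinP; exact: measurable_funD.
  - by move=> x _; rewrite lee_fin lerDr sqr_ge0.
have [_ Ar] := Appx_L2 mfr ifr'.
have [_ Ai] := Appx_L2 mfi ifi'.
have e2 : 0 < e / 2 by rewrite divr_gt0.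
have [p1 [tp1 hp1]] := Ar _ e2.
have [p2 [tp2 hp2]] := Ai _ e2.
have [n [tau [a [b hr]]]] := rep_trig base tp1 tp2.
exists n, tau, a, b.
have mp1 := Trig_meas tp1; have mp2 := Trig_meas tp2.
rewrite (eq_integral (fun x => ((fr x - p1 x) ^+ 2)%:E + ((fi x - p2 x) ^+ 2)%:E)%E); last first.
  by move=> x _; have [-> ->] := hr x; rewrite EFinD.
rewrite ge0_integralD //; last 4 first.
- by move=> x _; apply: efin_ge0; exact: sqr_ge0.
- by apply/measurable_EFinP; exact: msq.
- by move=> x _; apply: efin_ge0; exact: sqr_ge0.
- by apply/measurable_EFinP; exact: msq.
rewrite [e]splitr EFinD; exact: lteD hp1 hp2.
Qed.
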